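(* Let $\mathcal{A}\subset\mathbb{Z}$ be a finite alphabet, let $G=(V,E)$ be a finite directed graph with edge labelling $\ell:E\to\mathcal{A}$, assume the matrix $M=\sum_{a\in\mathcal{A}}M_a$ is primitive, let $\beta>1$ be a Pisot number and let $\nu=(\phi^+)_*(\mu^+)$ as described in the context. If $x\in\mathbb{R}$ satisfies $\nu(\{x\})>0$, then the set $(\phi^+)^{-1}(\{x\})$ is open in $\mathcal{K}^+$.
   Context: For $a\in\mathcal{A}$, $M_a$ is the $V\times V$ matrix with $(M_a)_{ij}=1$ if $(i,j)\in E$ and $\ell((i,j))=a$, and $0$ otherwise. By Perron–Frobenius, $M$ has a dominant eigenvalue $\lambda>0$ with positive left eigenvector $\mathbf v_L$ and right eigenvector $\mathbf v_R$, normalised by $\mathbf v_L^{\mathsf T}\mathbf v_R=1$. $\mathcal{K}^+\subseteq\mathcal{A}^{\mathbb{N}}$ is the set of sequences $(\ell(e_k))_{k\ge1}$ for infinite paths $e_1e_2\ldots$ in $G$ (terminal vertex of $e_j$ equals initial vertex of $e_{j+1}$), with the topology generated by cylinder sets $[\varepsilon_1,\ldots,\varepsilon_k]=\{x\in\mathcal{K}^+: x_1=\varepsilon_1,\ldots,x_k=\varepsilon_k\}$. $\mu^+$ is the Borel probability measure on $\mathcal{K}^+$ with $\mu^+([\varepsilon_1,\ldots,\varepsilon_k])=\lambda^{-k}\mathbf v_L^{\mathsf T}M_{\varepsilon_1}\cdots M_{\varepsilon_k}\mathbf v_R$. A Pisot number is an algebraic integer $>1$ all of whose other Galois conjugates have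 modulus $<1$ (integers $\ge2$ included). $\phi^+:\mathcal{K}^+\to\mathbb{R}$, $(x_k)\mapsto\sum_{k\ge1}x_k\beta^{-k}$, and $\nu(A)=\mu^+((\phi^+)^{-1}(A))$. *)

(* Defs.v *)
From HB Require Import structures.
From mathcomp Require Import all_boot all_order all_algebra.
From mathcomp Require Import all_classical all_reals all_analysis.
From mathcomp Require Import complex.
Set Implicit Arguments. Unset Strict Implicit. Unset Printing Implicit Defensive.
Import Order.TTheory GRing.Theory Num.Theory.
Local Open Scope classical_set_scope.
Local Open Scope ring_scope.

(* Pisot number: real algebraic integer > 1 whose other Galois conjugates
   all have modulus < 1.  The minimal polynomial of an algebraic integer is
   the monic, integer-coefficient, Q-irreducible polynomial vanishing at it. *)
Definition is_pisot (R : realType) (b : R) : Prop :=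
  1 < b /\
  exists p : {poly rat},
    [/\ p \is monic, p \is a polyOver Num.int, irreducible_poly p,
        root (map_poly ratr p) b &
        forall z : R[i], root (map_poly ratr p) z -> z != (b%:C)%C -> `|z| < 1].

Section Graph.
Variables (R : realType) (V : finType) (E : rel V) (lab : V -> V -> int).

Definition Mlab (a : int) (i j : V) : R := ((E i j) && (lab i j == a))%:R.
(* M = sum_a M_a, i.e. the adjacency matrix (each edge has exactly one label) *)
Definition Madj (i j : V) : R := (E i j)%:R.

Fixpoint Mpow (k : nat) (i j : V) : R :=
  match k with
  | 0 => (i == j)%:R
  | k'.+1 => \sum_(l : V) Mpow k' i l * Madj l j
  end.

Definition primitive_mx : Prop := exists k : nat, forall i j : V, 0 < Mpow k i j.

Definition rowMlab (r : V -> R) (a : int) : V -> R :=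
  fun j => \sum_(i : V) r i * Mlab a i j.

Definition word_weight (vL vR : V -> R) (w : seq int) : R :=
  \sum_(j : V) (foldl rowMlab vL w) j * vR j.

(* K^+ : label sequences of infinite paths (x_{k+1} is stored at index k) *)
Definition Kplus : set (nat -> int) :=
  [set x | exists p : nat -> V, forall k, E (p k) (p k.+1) /\ lab (p k) (p k.+1) = x k].

End Graph.

HB.instance Definition _ := isPointed.Build int 0%R.

Definition cyl (w : seq int) : set (nat -> int) :=
  [set x | forall i, (i < size w)%N -> x i = nth 0 w i].

(* sequence space with the sigma-algebra generated by cylinders (= Borel sets
   of the product topology, int discrete) *)
Definition SeqSpace : measurableType ((range cyl).-sigma)%mdisp := g_sigma_algebraType (range cyl).

(* openness in the topology of K^+ generated by the cylinder sets *)
Definition open_in_K (K S : set (nat -> int)) : Prop :=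
  S `<=` K /\
  forall x, S x -> exists k : nat, forall y, K y -> (forall i, (i < k)%N -> y i = x i) -> S y.

Definition phi (R : realType) (beta : R) (x : nat -> int) : R :=
  limn (fun n => \sum_(k < n) (x k)%:~R * beta ^- k.+1).

(* Main.v *)
Require Import Defs.
From HB Require Import structures.
From mathcomp Require Import all_boot all_order all_algebra.
From mathcomp Require Import all_classical all_reals all_analysis.
From mathcomp Require Import complex.
From mathcomp Require Import ring lra.
Import numFieldNormedType.Exports.
Set Implicit Arguments. Unset Strict Implicit. Unset Printing Implicit Defensive.
Import Order.TTheory GRing.Theory Num.Theory.
Local Open Scope classical_set_scope.
Local Open Scope ring_scope.

Module s1.

Section Geo.
Variables (R : realType) (beta : R).
Hypothesis b1 : 1 < beta.

Lemma beta0 : 0 < beta. Proof. exact: lt_trans b1. Qed.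

Lemma bern n : 1 + n%:R * (beta - 1) <= beta ^+ n.
Proof.
elim: n => [|n IH]; first by rewrite mul0r addr0 expr0.
have h : 1 <= beta ^+ n by rewrite exprn_ege1 // ltW.
have hn : 0 <= n%:R :> R by [].
have h1 : 0 <= beta * (beta ^+ n - (1 + n%:R * (beta - 1))) by rewrite mulr_ge0 ?subr_ge0 // ltW // beta0.
have h2 : 0 <= n%:R * ((beta - 1) * (beta - 1)) :> R by rewrite mulr_ge0 // mulr_ge0 // subr_ge0 ltW.
rewrite exprS -nat1r; nra.
Qed.

Lemma small_pow (D eps : R) : 0 < eps -> exists n, D * beta ^- n < eps.
Proof.
move=> e0.
have bm1 : 0 < beta - 1 by rewrite subr_gt0.
set m := Num.truncn (D / (eps * (beta - 1))).
have hm := archimedean.Num.Theory.truncnS_gt (D / (eps * (beta - 1))).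
exists m.+1.
have bn0 : 0 < beta ^+ m.+1 by rewrite exprn_gt0 // beta0.
have hb := bern m.+1.
rewrite ltr_pdivrMr //.
rewrite ltr_pdivrMr ?mulr_gt0 // in hm.
nra.
Qed.

Fixpoint sw (w : seq int) : R := if w is a :: w' then beta^-1 * (a%:~R + sw w') else 0.

Lemma sw_cat w1 w2 : sw (w1 ++ w2) = sw w1 + beta ^- size w1 * sw w2.
Proof.
elim: w1 => [|a w IH] /=; first by rewrite expr0 invr1 mul1r add0r.
rewrite IH exprS invfM; ring.
Qed.

Lemma sw_bound (amax : R) w : 0 <= amax -> (forall a, a \in w -> `|a%:~R| <= amax) ->
  `|sw w| <= amax / (beta - 1).
Proof.
move=> a0; elim: w => [|a w IH] H /=.
  by rewrite normr0 divr_ge0 // subr_ge0 ltW.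
have bm1 : 0 < beta - 1 by rewrite subr_gt0.
have ha : `|a%:~R| <= amax by apply: H; rewrite mem_head.
have hw : `|sw w| <= amax / (beta - 1).
  by apply: IH => b hb; apply: H; rewrite in_cons hb orbT.
rewrite normrM normfV (gtr0_norm beta0) ler_pdivrMl ?beta0 //.
apply: (le_trans (ler_normD _ _)).
have -> : beta * (amax / (beta - 1)) = amax + amax / (beta - 1).
  by field; rewrite subr_eq0 gt_eqF.
exact: lerD.
Qed.

Lemma sum_sw (y : nat -> int) n : \sum_(k < n) (y k)%:~R * beta ^- k.+1 = sw (mkseq y n).
Proof.
elim: n => [|n IH]; first by rewrite big_ord0.
rewrite big_ord_recr IH mkseqS -cats1 sw_cat size_mkseq /= exprSr invfM; ring.
Qed.

Lemma mkseqD (y : nat -> int) n k : mkseq y (n + k) = mkseq y n ++ mkseq (fun i => y (n + i)%N) k.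
Proof.
rewrite /mkseq iotaD map_cat add0n; congr (_ ++ _).
by rewrite -[in LHS](addn0 n) iotaDl -map_comp.
Qed.

Section Tail.
Variables (y : nat -> int) (amax : R).
Hypothesis a0 : 0 <= amax.
Hypothesis Hy : forall i, `|(y i)%:~R| <= amax.
Let C := amax / (beta - 1).

Lemma sw_tail n m : (n <= m)%N -> `|sw (mkseq y m) - sw (mkseq y n)| <= C * beta ^- n.
Proof.
move=> /subnKC <-; rewrite mkseqD sw_cat size_mkseq addrAC subrr add0r.
rewrite normrM normfV normrX (gtr0_norm beta0) mulrC ler_wpM2r //.
  by rewrite invr_ge0 exprn_ge0 // ltW // beta0.
apply: sw_bound => // a /mapP [i _ ->]; exact: Hy.
Qed.

Lemma cvg_sw : cvgn (fun n => sw (mkseq y n)).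
Proof.
apply/cauchy_cvgP; apply: (@cauchy_exP R R) => e e0.
have [N HN] := small_pow C e0.
exists (sw (mkseq y N)); exists N => // n /= hn.
rewrite -ball_normE /= distrC (le_lt_trans (sw_tail hn)) //.
Qed.

Lemma phi_tail n : `|phi beta y - sw (mkseq y n)| <= C * beta ^- n.
Proof.
have -> : phi beta y = limn (fun n => sw (mkseq y n)).
  by rewrite /phi; congr (limn _); apply: funext => m; rewrite sum_sw.
set l := limn _.
rewrite leNgt; apply/negP => hlt.
set eps := `|l - sw (mkseq y n)| - C * beta ^- n.
have e0 : 0 < eps by rewrite subr_gt0.
have := cvgr_dist_lt (fun n => sw (mkseq y n)) l cvg_sw eps e0.
move=> [N _ HN].
have /HN hm : (N <= maxn N n)%N by rewrite leq_maxl.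
have := sw_tail (leq_maxr N n).
move: hm; rewrite /= -/l => hm ht.
have : `|l - sw (mkseq y n)| < eps + C * beta ^- n.
  apply: (le_lt_trans (ler_distD (sw (mkseq y (maxn N n))) _ _)).
  by rewrite ltr_leD.
by rewrite /eps subrK ltxx.
Qed.
End Tail.

Lemma zero_small (t D : R) : (forall m, `|t| <= D * beta ^- m) -> t = 0.
Proof.
move=> H; apply/eqP; apply: contraT => tn0.
have t0 : 0 < `|t| by rewrite normr_gt0.
have [m hm] := small_pow D t0.
by have := H m; rewrite leNgt hm.
Qed.

Lemma powV_le m n : (m <= n)%N -> beta ^- n <= beta ^- m.
Proof.
move=> mn; rewrite lef_pV2 ?posrE ?exprn_gt0 ?beta0 //.
by rewrite ler_eXn2l.
Qed.

Lemma powV_gt0 n : 0 < beta ^- n.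
Proof. by rewrite invr_gt0 exprn_gt0 // beta0. Qed.
End Geo.

End s1.
Import s1.

Module s2.

Lemma sum_eq1 (R : realType) (s : seq int) x : uniq s -> x \in s ->
  \sum_(a <- s) ((x == a)%:R : R) = 1.
Proof.
elim: s => [|b s IH] //= /andP [bs us]; rewrite in_cons big_cons.
case: eqP => [-> _|_ /= xs]; last by rewrite add0r IH.
rewrite big1_seq ?addr0 // => a /= ain; case: eqP => // ba.
by move: bs; rewrite ba ain.
Qed.

Lemma sum_drop (R : realType) (T : eqType) (s : seq T) (b : T) (f g : T -> R) :
  b \in s -> f b <= 0 -> (forall t, f t <= g t) ->
  \sum_(t <- s) f t <= \sum_(t <- s) g t - g b.
Proof.
move=> + fb fg; elim: s => [|a s IH] //; rewrite in_cons !big_cons.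
case: eqP => [<- _|_ /= bs].
  rewrite addrAC subrr add0r -[X in _ <= X]add0r; apply: lerD fb _.
  by apply: ler_sum => t _.
by rewrite -addrA lerD // IH.
Qed.

Section Graph.
Variables (R : realType) (V : finType) (E : rel V) (lab : V -> V -> int)
  (beta lam : R) (vR : V -> R).
Hypotheses (b1 : 1 < beta) (lam0 : 0 < lam) (vR0 : forall i, 0 < vR i)
  (eigR : forall i, \sum_(j : V) Madj R E i j * vR j = lam * vR i).

Definition Alph : seq int := undup [seq lab p.1 p.2 | p <- enum {: V * V}].
Definition amax : R := \sum_(p : V * V) `|(lab p.1 p.2)%:~R : R|.
Definition Cb : R := amax / (beta - 1).

Lemma amax_ge0 : 0 <= amax.
Proof. by apply: sumr_ge0. Qed.

Lemma lab_in_A i j : lab i j \in Alph.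
Proof. by rewrite mem_undup; apply/mapP; exists (i, j) => //; rewrite mem_enum. Qed.

Lemma lab_le i j : `|(lab i j)%:~R : R| <= amax.
Proof.
rewrite /amax (bigD1 (i, j)) //= lerDl; exact: sumr_ge0.
Qed.

Lemma A_bound a : a \in Alph -> `|a%:~R : R| <= amax.
Proof. by rewrite mem_undup => /mapP [p _ ->]; exact: lab_le. Qed.

Fixpoint words n : seq (seq int) :=
  if n is n'.+1 then [seq a :: w | a <- Alph, w <- words n'] else [:: [::]].

Lemma wordsP n w : (w \in words n) = (size w == n) && all (fun a => a \in Alph) w.
Proof.
elim: n w => [|n IH] [|a w] //=.
  by apply/negP => /allpairsP [[b u] [_ _]].
apply/allpairsP/and3P => [[[b u] /= [bA uw [-> ->]]]|[sw aA aw]].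
  by move: uw; rewrite IH => /andP [/eqP -> ->]; rewrite bA.
by exists (a, w); split => //=; rewrite IH -(eqn_add2r 1) !addn1 sw.
Qed.

Lemma sum_words_cat (f : seq int -> R) K n :
  \sum_(w <- words (K + n)) f w = \sum_(w1 <- words K) \sum_(w2 <- words n) f (w1 ++ w2).
Proof.
elim: K f => [|K IH] f; first by rewrite add0n big_seq1.
rewrite addSn /= !big_allpairs_dep; apply: eq_bigr => a _.
by rewrite IH.
Qed.

Definition fold (r : V -> R) (w : seq int) := foldl (rowMlab E lab) r w.
Definition Lw (r : V -> R) (w : seq int) := \sum_(j : V) fold r w j * vR j.
Definition delta (v : V) : V -> R := fun i => (i == v)%:R.

Lemma sum_delta (r : V -> R) j : \sum_(v : V) r v * delta v j = r j.
Proof.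
rewrite (bigD1 j) //= /delta eqxx mulr1 big1 ?addr0 // => v /negbTE.
by rewrite eq_sym => ->; rewrite mulr0.
Qed.

Lemma fold_lin r w j : fold r w j = \sum_(v : V) r v * fold (delta v) w j.
Proof.
elim: w r j => [|a w IH] r j /=; first by rewrite sum_delta.
rewrite /fold /= -/(fold _ w) IH.
under eq_bigr => v _ do rewrite -/(fold _ w) IH mulr_sumr.
rewrite exchange_big /=; apply: eq_bigr => u _.
rewrite /rowMlab mulr_suml; apply: eq_bigr => v _.
rewrite mulrA; congr (_ * _).
rewrite (bigD1 v) //= /delta eqxx mul1r big1 ?addr0 // => i /negbTE ->.
by rewrite mul0r.
Qed.

Lemma Mlab_ge0 a i j : 0 <= Mlab R E lab a i j.
Proof. by rewrite /Mlab ler0n. Qed.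

Lemma fold_ge0 r w : (forall i, 0 <= r i) -> forall j, 0 <= fold r w j.
Proof.
elim: w r => [|a w IH] r r0 j //=.
apply: IH => i; apply: sumr_ge0 => k _; exact: mulr_ge0 (r0 k) (Mlab_ge0 _ _ _).
Qed.

Lemma Lw_ge0 r w : (forall i, 0 <= r i) -> 0 <= Lw r w.
Proof.
move=> r0; apply: sumr_ge0 => j _; apply: mulr_ge0; first exact: fold_ge0.
exact: ltW.
Qed.

Lemma fold_scale c r w j : fold (fun i => c * r i) w j = c * fold r w j.
Proof.
rewrite fold_lin [in RHS]fold_lin mulr_sumr; apply: eq_bigr => v _; by rewrite mulrA.
Qed.

Lemma Lw_lin r w : Lw r w = \sum_(v : V) r v * Lw (delta v) w.
Proof.
rewrite /Lw.
under eq_bigr => j _ do rewrite fold_lin mulr_suml.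
rewrite exchange_big /=; apply: eq_bigr => v _.
rewrite mulr_sumr; apply: eq_bigr => j _; by rewrite mulrA.
Qed.

Lemma sumA_Mlab i j : \sum_(a <- Alph) Mlab R E lab a i j = Madj R E i j.
Proof.
rewrite /Mlab /Madj; case: (E i j) => /=; last by rewrite big1.
apply: sum_eq1; [exact: undup_uniq | exact: lab_in_A].
Qed.

Lemma total n r : \sum_(w <- words n) lam ^- n * Lw r w = \sum_(j : V) r j * vR j.
Proof.
elim: n r => [|n IH] r; first by rewrite big_seq1 expr0 invr1 mul1r.
rewrite /= big_allpairs_dep.
have lne : lam != 0 by rewrite gt_eqF.
transitivity (\sum_(a <- Alph) lam^-1 * \sum_(w <- words n) lam ^- n * Lw (rowMlab E lab r a) w).
  apply: eq_bigr => a _; rewrite mulr_sumr; apply: eq_bigr => w _.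
  by rewrite exprS invfM mulrA.
transitivity (\sum_(a <- Alph) lam^-1 * \sum_(j : V) rowMlab E lab r a j * vR j).
  by apply: eq_bigr => a _; congr (_ * _); exact: IH.
rewrite -mulr_sumr.
transitivity (lam^-1 * \sum_(i : V) r i * (lam * vR i)); last first.
  by rewrite mulr_sumr; apply: eq_bigr => i _; field.
congr (_ * _).
under [RHS]eq_bigr => i _ do rewrite -eigR mulr_sumr.
rewrite [RHS]exchange_big /= exchange_big /=.
apply: eq_bigr => j _.
rewrite /rowMlab.
under eq_bigr => a _ do rewrite mulr_suml.
rewrite exchange_big /=.
apply: eq_bigr => i _.
rewrite -sumA_Mlab mulr_suml mulr_sumr; apply: eq_bigr => a _; ring.
Qed.

End Graph.

End s2.
Import s2.

Module s3.

Section G3.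
Variables (R : realType) (V : finType) (E : rel V) (lab : V -> V -> int)
  (beta lam : R) (vR : V -> R).
Hypotheses (b1 : 1 < beta) (lam0 : 0 < lam) (vR0 : forall i, 0 < vR i)
  (eigR : forall i, \sum_(j : V) Madj R E i j * vR j = lam * vR i).

Local Notation C := (Cb lab beta).
Local Notation wds := (words lab).
Local Notation sw := (sw beta).
Local Notation Lw := (Lw E lab vR).
Local Notation fold := (fold E lab).
Local Notation delta := (delta R).

Definition Fw (r : V -> R) (z : R) n :=
  \sum_(w <- wds n | `|z - sw w| <= C * beta ^- n) lam ^- n * Lw r w.

Lemma words_size w n : w \in wds n -> size w = n.
Proof. by rewrite wordsP => /andP [/eqP]. Qed.

Lemma words_bound w n : w \in wds n -> forall a, a \in w -> `|a%:~R : R| <= amax R lab.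
Proof. by rewrite wordsP => /andP [_ /allP H] a /H; exact: A_bound. Qed.

Lemma words_sw w n : w \in wds n -> `|sw w| <= C.
Proof. move=> /words_bound H; apply: sw_bound => //; exact: amax_ge0. Qed.

Lemma F_decomp r z K n : Fw r z (K + n) =
  \sum_(w1 <- wds K) Fw (fun i => lam ^- K * fold r w1 i) (beta ^+ K * (z - sw w1)) n.
Proof.
rewrite /Fw big_mkcond sum_words_cat big_seq [RHS]big_seq.
apply: eq_big => // w1 w1K.
rewrite [RHS]big_mkcond; apply: eq_big => // w2 _.
have sz := words_size w1K.
rewrite sw_cat sz.
have bK : beta ^+ K != 0 by rewrite gt_eqF // exprn_gt0 // (beta0 b1).
have cond : (`|z - (sw w1 + beta ^- K * sw w2)| <= C * beta ^- (K + n)) =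
            (`|beta ^+ K * (z - sw w1) - sw w2| <= C * beta ^- n).
  have -> : z - (sw w1 + beta ^- K * sw w2) = beta ^- K * (beta ^+ K * (z - sw w1) - sw w2).
    by field.
  rewrite normrM ger0_norm ?(ltW (powV_gt0 b1 _)) // exprD invfM mulrCA.
  by rewrite ler_pM2l // powV_gt0.
rewrite cond; case: ifP => // _.
rewrite /Lw /s2.Lw !mulr_sumr; apply: eq_bigr => j _.
rewrite fold_scale /fold /s2.fold foldl_cat exprD invfM; ring.
Qed.

Lemma F_lin r z n : Fw r z n = \sum_(v : V) r v * Fw (delta v) z n.
Proof.
rewrite /Fw.
under eq_bigr => w _ do rewrite Lw_lin mulr_sumr.
rewrite exchange_big /=; apply: eq_bigr => v _.
rewrite mulr_sumr; apply: eq_bigr => w _; ring.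
Qed.

Lemma F_le_total r z n : (forall i, 0 <= r i) -> Fw r z n <= \sum_(j : V) r j * vR j.
Proof.
move=> r0; rewrite -(s2.total lab lam0 eigR n r) /Fw big_mkcond /=.
apply: ler_sum => w _; case: ifP => // _.
apply: mulr_ge0; first by rewrite invr_ge0 exprn_ge0 // ltW.
exact: Lw_ge0.
Qed.

Definition Lv v (y : nat -> int) := exists p : nat -> V,
  p 0%N = v /\ forall k, E (p k) (p k.+1) /\ lab (p k) (p k.+1) = y k.

Lemma Lv_bound v y : Lv v y -> forall i, `|(y i)%:~R : R| <= amax R lab.
Proof. by move=> [p [_ H]] i; have [_ <-] := H i; exact: lab_le. Qed.

Lemma Lv_words v y n : Lv v y -> mkseq y n \in wds n.
Proof.
move=> [p [_ H]]; rewrite wordsP size_mkseq eqxx /=.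
apply/allP => a /mapP [i _ ->]; have [_ <-] := H i; exact: lab_in_A.
Qed.

Lemma fold_path (r : V -> R) (p : nat -> V) y :
  (forall k, E (p k) (p k.+1) /\ lab (p k) (p k.+1) = y k) -> (forall i, 0 <= r i) ->
  forall K, r (p 0%N) <= fold r (mkseq y K) (p K).
Proof.
move=> H r0; elim=> [|K IH] //.
rewrite mkseqS /fold /s2.fold foldl_rcons -/(s2.fold E lab r _) /rowMlab.
rewrite (bigD1 (p K)) //=.
have [e l] := H K.
have -> : Mlab R E lab (y K) (p K) (p K.+1) = 1 by rewrite /Mlab e l eqxx.
rewrite mulr1; apply: (le_trans IH); rewrite lerDl.
apply: sumr_ge0 => i _; apply: mulr_ge0; [exact: fold_ge0 | exact: Mlab_ge0].
Qed.

End G3.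

End s3.
Import s3.

Module s4.

Section G4.
Variables (R : realType) (V : finType) (E : rel V) (lab : V -> V -> int)
  (beta lam : R) (vR : V -> R).
Hypotheses (b1 : 1 < beta) (lam0 : 0 < lam) (vR0 : forall i, 0 < vR i)
  (eigR : forall i, \sum_(j : V) Madj R E i j * vR j = lam * vR i).

Local Notation C := (Cb lab beta).
Local Notation wds := (words lab).
Local Notation sw := (sw beta).
Local Notation Lw := (Lw E lab vR).
Local Notation fold := (fold E lab).
Local Notation delta := (delta R).
Local Notation Fw := (Fw E lab beta lam vR).
Local Notation Lv := (Lv E lab).

Lemma C_ge0 : 0 <= C.
Proof. by rewrite /Cb divr_ge0 ?amax_ge0 // subr_ge0 ltW. Qed.

Lemma sum_delta_vR v : \sum_(j : V) delta v j * vR j = vR v.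
Proof.
rewrite (bigD1 v) //= /s2.delta eqxx mul1r big1 ?addr0 // => j /negbTE ->.
by rewrite mul0r.
Qed.

Lemma delta_ge0 (v : V) i : 0 <= delta v i.
Proof. by rewrite /s2.delta ler0n. Qed.

Lemma Lv_phi_tail v y n : Lv v y -> `|phi beta y - sw (mkseq y n)| <= C * beta ^- n.
Proof. move=> Ly; apply: phi_tail => //; [exact: amax_ge0 | exact: Lv_bound Ly]. Qed.

Hypothesis NF : forall v, exists y y',
  [/\ Lv v y, Lv v y' & phi beta y != phi beta y'].
Variable v0 : V.

Lemma contraction : exists (K : nat) (eta : R), [/\ 0 < eta, eta < 1 &
  forall j (r : V -> R) z, (forall i, 0 <= r i) ->
    Fw r z (j * K) <= (1 - eta) ^+ j * \sum_(i : V) r i * vR i].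
Proof.
have [Y HY] := choice NF.
have [Y' HY'] := choice HY.
pose d v := `|phi beta (Y v) - phi beta (Y' v)|.
have d0 v : 0 < d v.
  by case: (HY' v) => _ _ ne; rewrite normr_gt0 subr_eq0.
have hk v : exists k, (3 * C) * beta ^- k < d v / 2.
  by apply: small_pow => //; rewrite divr_gt0.
have [kf Hkf] := choice hk.
pose K := \max_(v : V) kf v.
have HK v : 3 * C * beta ^- K < d v / 2.
  apply: le_lt_trans (Hkf v); apply: ler_wpM2l.
    by rewrite mulr_ge0 // C_ge0.
  by apply: powV_le => //; exact: leq_bigmax.
pose m := (\sum_(v : V) (vR v)^-1)^-1.
have sinv0 : 0 < \sum_(v : V) (vR v)^-1.
  by rewrite (bigD1 v0) //= ltr_pwDl ?invr_gt0 // sumr_ge0 // => i _; rewrite invr_ge0 ltW.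
have m0 : 0 < m by rewrite invr_gt0.
have mle v : m <= vR v.
  rewrite -[vR v]invrK lef_pV2 ?posrE ?invr_gt0 //.
  by rewrite (bigD1 v) //= lerDl sumr_ge0 // => i _; rewrite invr_ge0 ltW.
pose S := \sum_(v : V) vR v.
have Sge v : vR v <= S.
  by rewrite /S (bigD1 v) //= lerDl sumr_ge0 // => i _; rewrite ltW.
have S0 : 0 < S by apply: lt_le_trans (Sge v0).
have lK0 : 0 < lam ^- K by rewrite invr_gt0 exprn_gt0.
have BW v y : Lv v y ->
    lam ^- K * m <= lam ^- K * Lw (delta v) (mkseq y K) <= vR v.
  move=> Ly; apply/andP; split.
    rewrite ler_pM2l //.
    case: Ly => p [p0 Hp].
    have hf := fold_path Hp (delta_ge0 v) K.
    rewrite p0 /s2.delta eqxx in hf.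
    rewrite /s2.Lw (bigD1 (p K)) //=.
    apply: (le_trans (mle (p K))).
    apply: (@le_trans _ _ (fold (delta v) (mkseq y K) (p K) * vR (p K))).
      by rewrite -[X in X <= _]mul1r ler_wpM2r // ltW.
    rewrite lerDl sumr_ge0 // => i _; apply: mulr_ge0; last exact: ltW.
    by apply: fold_ge0; exact: delta_ge0.
  have := sum_drop (s := wds K) (b := mkseq y K) (f := fun _ => 0)
    (g := fun w => lam ^- K * Lw (delta v) w) (Lv_words K Ly) (lexx 0) _.
  rewrite s2.total // sum_delta_vR big1 // subr_ge0; apply.
  move=> w; apply: mulr_ge0; first exact: ltW.
  by apply: (Lw_ge0 E lab vR0) => i; exact: delta_ge0.
pose eta := lam ^- K * m / (2 * S).
have eta0 : 0 < eta by rewrite divr_gt0 ?mulr_gt0.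
have etaV v : eta * vR v <= lam ^- K * m.
  rewrite /eta mulrAC ler_pdivrMr ?mulr_gt0 // ler_pM2l ?mulr_gt0 //.
  have := Sge v; lra.
have eta1 : eta < 1.
  have [y [y' [Ly _ _]]] := NF v0.
  have /andP [h1 h2] := BW v0 y Ly.
  rewrite /eta ltr_pdivrMr ?mulr_gt0 // mul1r.
  have := Sge v0; lra.
have bad v z : exists y, Lv v y /\ d v / 2 <= `|z - phi beta y|.
  case: (HY' v) => L1 L2 _.
  case: (lerP (d v / 2) `|z - phi beta (Y v)|) => h; first by exists (Y v).
  exists (Y' v); split => //.
  have := ler_distD z (phi beta (Y v)) (phi beta (Y' v)).
  rewrite -/(d v) distrC => h'. 
  lra.
have Fzero v y z q n : Lv v y -> d v / 2 <= `|z - phi beta y| ->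
    Fw q (beta ^+ K * (z - sw (mkseq y K))) n = 0.
  move=> Ly hy.
  rewrite /s3.Fw big_seq_cond big1 // => w2 /andP [w2n cnd]; exfalso.
  move: cnd; apply/negP; rewrite -ltNge.
  set t := z - sw (mkseq y K).
  have A2 := Lv_phi_tail K Ly.
  have A3 := ler_distD (sw (mkseq y K)) z (phi beta y).
  have A4 := HK v.
  have A5 := words_sw b1 w2n.
  have A6 : C * beta ^- n <= C.
    have := powV_le b1 (leq0n n); rewrite expr0 invr1 => h.
    by rewrite -[X in _ <= X]mulr1; apply: ler_wpM2l => //; exact: C_ge0.
  have ht : 2 * C * beta ^- K < `|t|.
    rewrite /t; move: A3; rewrite [`|sw _ - phi _ _|]distrC; lra.
  have P0 : 0 < beta ^+ K by rewrite exprn_gt0 // (beta0 b1).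
  have hPt : 2 * C < beta ^+ K * `|t|.
    have := ltr_pM2l P0 (2 * C * beta ^- K) `|t|; rewrite ht => /esym.
    by rewrite mulrCA mulfV ?gt_eqF // mulr1.
  have A7 := ler_normD (beta ^+ K * t - sw w2) (sw w2).
  rewrite subrK normrM (gtr0_norm P0) in A7.
  lra.
exists K, eta; split => //.
elim=> [|j IH] r z r0.
  by rewrite mul0n expr0 mul1r; apply: F_le_total.
have Hv v z' : Fw (delta v) z' (K + j * K) <= (1 - eta) ^+ j.+1 * vR v.
  have [y [Ly hy]] := bad v z'.
  rewrite F_decomp //.
  have ej0 : 0 <= (1 - eta) ^+ j by rewrite exprn_ge0 // subr_ge0 ltW.
  apply: le_trans (sum_drop (s := wds K) (b := mkseq y K)
    (f := fun w1 => Fw (fun i => lam ^- K * fold (delta v) w1 i)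
                       (beta ^+ K * (z' - sw w1)) (j * K))
    (g := fun w1 => (1 - eta) ^+ j * (lam ^- K * Lw (delta v) w1))
    (Lv_words K Ly) _ _) _.
  - by rewrite (Fzero v y z') //.
  - move=> w1; apply: le_trans (IH _ _ _) _.
      move=> i; apply: mulr_ge0; first exact: ltW.
      by apply: (fold_ge0 E lab) => k; exact: delta_ge0.
    rewrite ler_wpM2l // /s2.Lw mulr_sumr le_eqVlt; apply/orP; left; apply/eqP.
    by apply: eq_bigr => i _; rewrite mulrA.
  rewrite -mulr_sumr s2.total // sum_delta_vR exprSr -mulrA.
  have /andP [h1 _] := BW v y Ly.
  have h2 := etaV v.
  have h3 : 0 <= (1 - eta) ^+ j * (lam ^- K * Lw (delta v) (mkseq y K) - eta * vR v).
    by apply: mulr_ge0 => //; rewrite subr_ge0 (le_trans h2 h1).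
  lra.
rewrite mulSn F_lin mulr_sumr; apply: ler_sum => v _.
by rewrite mulrCA ler_wpM2l // Hv.
Qed.

End G4.

End s4.
Import s4.

Module s5.

Section G5.
Variables (R : realType) (V : finType) (E : rel V) (lab : V -> V -> int) (beta : R).
Hypotheses (b1 : 1 < beta).

Local Notation C := (Cb lab beta).
Local Notation sw := (sw beta).
Local Notation Lv := (Lv E lab).

Lemma mpow_path k i j : 0 < Mpow R E k i j ->
  exists q : nat -> V, [/\ q 0%N = i, q k = j & forall t, (t < k)%N -> E (q t) (q t.+1)].
Proof.
elim: k j => [|k IH] j /=.
  case: eqP => [->|_]; last by rewrite ltxx.
  by move=> _; exists (fun _ => j).
move=> hs.
have [l hl] : exists l, 0 < Mpow R E k i l * Madj R E l j.
  apply/not_existsP => hn; move: hs; apply/negP; rewrite -leNgt.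
  by apply: sumr_le0 => l _; rewrite leNgt; apply/negP; apply: hn.
have hE : E l j.
  by move: hl; rewrite /Madj; case: (E l j) => //; rewrite mulr0 ltxx.
have hM : 0 < Mpow R E k i l by move: hl; rewrite /Madj hE mulr1.
have [q [q0 qk Hq]] := IH l hM.
exists (fun t => if (t <= k)%N then q t else j); split.
- by [].
- by rewrite ltnn.
move=> t ht; rewrite ltnS in ht; rewrite ht.
case: (ltnP t k) => h.
  exact: Hq.
have -> : t = k by apply/eqP; rewrite eqn_leq ht h.
by rewrite qk.
Qed.

Lemma phi_cat (c y : nat -> int) k :
  (forall i, `|(c i)%:~R : R| <= amax R lab) -> (forall i, `|(y i)%:~R : R| <= amax R lab) ->
  (forall i, c (k + i)%N = y i) ->
  phi beta c = sw (mkseq c k) + beta ^- k * phi beta y.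
Proof.
move=> Hc Hy Hcy.
suff : phi beta c - (sw (mkseq c k) + beta ^- k * phi beta y) = 0.
  by move/eqP; rewrite subr_eq0 => /eqP.
apply: (zero_small b1 (D := 2 * C)) => n.
have a0 := amax_ge0 R lab.
have t1 := phi_tail b1 a0 Hc (k + n).
have t2 := phi_tail b1 a0 Hy n.
rewrite mkseqD sw_cat size_mkseq (eq_mkseq (f := fun i => c (k + i)%N) Hcy) in t1.
have Q0 : 0 < beta ^- k := powV_gt0 b1 k.
have Q1 : beta ^- k <= 1 by have := powV_le b1 (leq0n k); rewrite expr0 invr1.
have P0 : 0 < beta ^- n := powV_gt0 b1 n.
rewrite exprD invfM in t1.
have C0 := C_ge0 lab b1.
have t3 := ler_distD (sw (mkseq c k) + beta ^- k * sw (mkseq y n)) (phi beta c)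
  (sw (mkseq c k) + beta ^- k * phi beta y).
have e : sw (mkseq c k) + beta ^- k * sw (mkseq y n) - (sw (mkseq c k) + beta ^- k * phi beta y)
   = beta ^- k * - (phi beta y - sw (mkseq y n)) by ring.
rewrite e normrM normrN (gtr0_norm Q0) in t3.
have t4 : beta ^- k * `|phi beta y - sw (mkseq y n)| <= beta ^- k * (C * beta ^- n).
  by rewrite ler_pM2l.
have t5 : 0 <= (1 - beta ^- k) * (C * beta ^- n).
  by apply: mulr_ge0; [rewrite subr_ge0 | apply: mulr_ge0 => //; exact: ltW].
rewrite -/(Cb lab beta) in t1 t2.
lra.
Qed.

Definition Full v := forall y y', Lv v y -> Lv v y' -> phi beta y = phi beta y'.

Lemma agree_mkseq (y y' : nat -> int) k : (forall i, (i < k)%N -> y i = y' i) ->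
  mkseq y k = mkseq y' k.
Proof.
move=> H; apply/eq_in_map => i; rewrite mem_iota add0n => /andP [_ hi]; exact: H.
Qed.

Lemma full_prop v w k (q : nat -> V) : q 0%N = v -> q k = w ->
  (forall t, (t < k)%N -> E (q t) (q t.+1)) -> Full v -> Full w.
Proof.
move=> q0 qk Hq Fv.
have ext y : Lv w y -> Lv v (fun i => if (i < k)%N then lab (q i) (q i.+1) else y (i - k)%N).
  move=> [p [p0 Hp]].
  exists (fun i => if (i <= k)%N then q i else p (i - k)%N); split; first by rewrite leq0n.
  move=> i; case: (ltnP i k) => h.
    by rewrite /= (ltnW h); split => //; exact: Hq.
  have e1 : (if (i <= k)%N then q i else p (i - k)%N) = p (i - k)%N.
    case: (leqP i k) => // h'.
    have -> : i = k by apply/eqP; rewrite eqn_leq h h'.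
    by rewrite subnn qk p0.
  rewrite /= e1 subSn //; exact: Hp.
move=> y y' Ly Ly'.
have L1 := ext y Ly; have L2 := ext y' Ly'.
have hcy (y0 : nat -> int) i :
    (fun i => if (i < k)%N then lab (q i) (q i.+1) else y0 (i - k)%N) (k + i)%N = y0 i.
  by rewrite /= ltnNge leq_addr /= addKn.
have hcat y0 (Ly0 : Lv w y0) := phi_cat (Lv_bound R (ext y0 Ly0)) (Lv_bound R Ly0)
   (k := k) (hcy y0).
have := Fv _ _ L1 L2.
rewrite (hcat y Ly) (hcat y' Ly').
rewrite (agree_mkseq (y := fun i => if (i < k)%N then lab (q i) (q i.+1) else y (i - k)%N)
  (y' := fun i => if (i < k)%N then lab (q i) (q i.+1) else y' (i - k)%N)); last first.
  by move=> i ->.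
move/addrI/mulfI; apply; rewrite gt_eqF //; exact: powV_gt0.
Qed.

Lemma open_full : (forall v, Full v) -> exists k, forall u w y y', Lv u y -> Lv w y' ->
  (forall i, (i < k)%N -> y i = y' i) -> phi beta y = phi beta y'.
Proof.
move=> Hf.
have a0 := amax_ge0 R lab.
have C0 := C_ge0 lab b1.
have hk (p : V * V) : exists k, forall y y', Lv p.1 y -> Lv p.2 y' ->
    (forall i, (i < k)%N -> y i = y' i) -> phi beta y = phi beta y'.
  case: (pselect (exists y0 y0', [/\ Lv p.1 y0, Lv p.2 y0' & phi beta y0 != phi beta y0'])).
    move=> [y0 [y0' [L0 L0' ne]]].
    have d0 : 0 < `|phi beta y0 - phi beta y0'| by rewrite normr_gt0 subr_eq0.
    have [k hk] := small_pow b1 (2 * C) d0.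
    exists k => y y' Ly Ly' ag; exfalso.
    have t1 := Lv_phi_tail b1 k Ly.
    have t2 := Lv_phi_tail b1 k Ly'.
    rewrite (agree_mkseq ag) in t1.
    rewrite (Hf _ _ _ Ly L0) (Hf _ _ _ Ly' L0') in t1 t2.
    have t3 := ler_distD (sw (mkseq y' k)) (phi beta y0) (phi beta y0').
    rewrite [`|sw _ - phi _ _|]distrC in t3.
    lra.
  move=> H; exists 0%N => y y' Ly Ly' _.
  case: (eqVneq (phi beta y) (phi beta y')) => // ne; exfalso; apply: H.
  by exists y, y'; split.
have [kf Hkf] := choice hk.
exists (\max_(p : V * V) kf p) => u w y y' Ly Ly' ag.
apply: (Hkf (u, w)) => // i hi; apply: ag.
exact: leq_trans hi (leq_bigmax (u, w)).
Qed.

End G5.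

Section Konig.
Variables (V : finType) (E : rel V) (lab : V -> V -> int).

Lemma konig (y : nat -> int) :
  (forall n, exists q : nat -> V, forall i, (i < n)%N -> E (q i) (q i.+1) /\ lab (q i) (q i.+1) = y i) ->
  Kplus E lab y.
Proof.
move=> H.
pose good v m := forall n, exists q : nat -> V, q 0%N = v /\
  forall i, (i < n)%N -> E (q i) (q i.+1) /\ lab (q i) (q i.+1) = y (m + i)%N.
have g0 : exists v, good v 0%N.
  apply/not_existsP => hn.
  have hn' v : exists n, ~ (exists q : nat -> V, q 0%N = v /\
      forall i, (i < n)%N -> E (q i) (q i.+1) /\ lab (q i) (q i.+1) = y (0 + i)%N).
    by apply/existsNP; exact: hn v.
  have [N HN] := choice hn'.
  have [q Hq] := H (\max_v N v).
  apply: (HN (q 0%N)); exists q; split => // i hi; rewrite add0n; apply: Hq.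
  exact: leq_trans hi (leq_bigmax (q 0%N)).
have step v m : good v m -> exists v', [/\ E v v', lab v v' = y m & good v' m.+1].
  move=> gv; apply/not_existsP => hn.
  have hn' v' : exists n, (E v v' /\ lab v v' = y m) -> ~ (exists q : nat -> V, q 0%N = v' /\
      forall i, (i < n)%N -> E (q i) (q i.+1) /\ lab (q i) (q i.+1) = y (m.+1 + i)%N).
    case: (pselect (E v v' /\ lab v v' = y m)) => [[e l]|nel]; last by exists 0%N.
    have : ~ good v' m.+1 by move=> g; apply: (hn v'); split.
    move=> /existsNP [n hnn]; exists n => _; exact: hnn.
  have [N HN] := choice hn'.
  have [q [q0 Hq]] := gv (\max_v' N v').+1.
  have [e1 l1] := Hq 0%N isT.
  rewrite q0 addn0 in e1 l1.
  apply: (HN (q 1%N)); first by split.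
  exists (fun i => q i.+1); split => // i hi.
  rewrite addSnnS; apply: Hq; rewrite ltnS.
  exact: leq_trans hi (leq_bigmax (q 1%N)).
have hstep (vm : V * nat) : exists v', good vm.1 vm.2 ->
    [/\ E vm.1 v', lab vm.1 v' = y vm.2 & good v' vm.2.+1].
  case: (pselect (good vm.1 vm.2)) => [g|ng]; last by exists vm.1.
  by have [v' h] := step _ _ g; exists v'.
have [g Hg] := choice hstep.
have [v0 gv0] := g0.
pose p := fix p m := if m is m'.+1 then g (p m', m') else v0.
have gp m : good (p m) m.
  elim: m => [|m IH] //=.
  by have [_ _ ?] := Hg (p m, m) IH.
exists p => k /=.
by have [e l _] := Hg (p k, k) (gp k).
Qed.
End Konig.

End s5.
Import s5.

Module s6.

Lemma cyl_meas (w : seq int) : measurable (cyl w : set SeqSpace).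
Proof. by apply: sub_sigma_algebra; exists w. Qed.

Lemma in_bigsetU (s : seq (seq int)) (P : pred (seq int)) (y : nat -> int) :
  (\big[setU/set0]_(w <- s | P w) cyl w) y <-> exists2 w, (w \in s) && P w & cyl w y.
Proof.
elim: s => [|a s IH]; first by rewrite big_nil; split => // -[w].
rewrite big_cons; split.
  case: ifP => Pa.
    case=> [h|/IH [w /andP [ws Pw] h]]; first by exists a; rewrite ?mem_head ?Pa.
    by exists w => //; rewrite in_cons ws orbT.
  by move=> /IH [w /andP [ws Pw] h]; exists w => //; rewrite in_cons ws orbT.
move=> [w /andP [+ Pw] h]; rewrite in_cons => /orP [/eqP wa|ws].
  by rewrite -wa Pw; left.
have h' : (\big[setU/set0]_(w <- s | P w) cyl w) y by apply/IH; exists w => //; rewrite ws.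
by case: ifP => _ //; right.
Qed.

Lemma mu_cyl_bound (R : realType) (mu : probability SeqSpace R) (f : seq int -> R)
  (s : seq (seq int)) (P : pred (seq int)) :
  (forall w, mu (cyl w) = (f w)%:E) ->
  (mu (\big[setU/set0]_(w <- s | P w) cyl w) <= (\sum_(w <- s | P w) f w)%:E)%E.
Proof.
move=> Hf; elim: s => [|a s IH]; first by rewrite !big_nil measure0.
rewrite !big_cons; case: (P a) => //.
apply: le_trans (measureU2 _ (cyl_meas a) _) _.
  by apply: bigsetU_measurable => w _; exact: cyl_meas.
by rewrite EFinD -Hf leeD2l.
Qed.

End s6.
Import s6.

Unset Implicit Arguments. Set Strict Implicit. Set Printing Implicit Defensive.

Theorem lemma5 (R : realType) (V : finType) (E : rel V) (lab : V -> V -> int)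
  (beta : R) (lam : R) (vL vR : V -> R)
  (mu : probability SeqSpace R) (x : R) :
  primitive_mx R E ->
  is_pisot beta ->
  0 < lam ->
  (forall i, 0 < vL i) -> (forall i, 0 < vR i) ->
  (forall j, \sum_(i : V) vL i * Madj R E i j = lam * vL j) ->
  (forall i, \sum_(j : V) Madj R E i j * vR j = lam * vR i) ->
  \sum_(i : V) vL i * vR i = 1 ->
  (forall w : seq int,
     mu (cyl w) = (lam ^- size w * word_weight E lab vL vR w)%:E) ->
  (0 < mu [set s | Kplus E lab s /\ phi beta s = x])%E ->
  open_in_K (Kplus E lab) [set s | Kplus E lab s /\ phi beta s = x].
Proof.
move=> Hprim [b1 _] lam0 vL0 vR0 eigL eigR norm Hmu Hpos.
set S := [set s | Kplus E lab s /\ phi beta s = x].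
have KLv y : Kplus E lab y -> exists v, Lv E lab v y.
  by move=> [p Hp]; exists (p 0%N), p.
case: (pselect (forall v, Full E lab beta v)) => [Hf|Hnf].
  have [k Hk] := open_full b1 Hf.
  split; first by move=> s [].
  move=> y [Ky hy]; exists k => y' Ky' ag; split => //.
  rewrite -hy.
  have [u Lu] := KLv _ Ky'; have [w Lw] := KLv _ Ky.
  exact: Hk Lu Lw ag.
have [w nfw] : exists w, ~ Full E lab beta w by apply/existsNP.
have NF : forall v, exists y y', [/\ Lv E lab v y, Lv E lab v y' & phi beta y != phi beta y'].
  move=> v; have [k Hk] := Hprim.
  have [q [q0 qk Hq]] := mpow_path (Hk v w).
  have nfv : ~ Full E lab beta v.
    by move=> fv; apply: nfw; move: (@full_prop R V E lab beta b1 v w k q q0 qk Hq fv).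
  apply/not_existsP => H1; apply: nfv => y y' Ly Ly'.
  case: (eqVneq (phi beta y) (phi beta y')) => // ne; exfalso.
  by apply: (H1 y); exists y'; split.
have [K [eta [eta0 eta1 Hc]]] := s4.contraction b1 lam0 vR0 eigR NF w.
pose C := Cb lab beta.
pose pw (u : seq int) := exists q : nat -> V, forall i, (i < size u)%N ->
  E (q i) (q i.+1) /\ lab (q i) (q i.+1) = nth 0 u i.
pose Pn n := \big[setU/set0]_(u <- words lab n | `[< pw u >]) cyl u.
pose Vn n := \big[setU/set0]_(u <- words lab n | `|x - sw beta u| <= C * beta ^- n) cyl u.
have Keq : Kplus E lab = \bigcap_n Pn n.
  apply/seteqP; split => y.
    move=> Ky n _; have [v Lv] := KLv _ Ky.
    apply/in_bigsetU; exists (mkseq y n).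
      rewrite (Lv_words n Lv) /=; apply/asboolP.
      case: Ky => p Hp; exists p => i; rewrite size_mkseq => hi.
      by rewrite nth_mkseq.
    by move=> i; rewrite size_mkseq => hi; rewrite nth_mkseq.
  move=> Hy; apply: konig => n.
  have /in_bigsetU [u /andP [un /asboolP [q Hq]] cu] := Hy n I.
  exists q => i hi; rewrite cu; last by rewrite (words_size un).
  by apply: Hq; rewrite (words_size un).
have Seq : S = Kplus E lab `&` \bigcap_n Vn n.
  apply/seteqP; split => y.
    move=> [Ky hy]; split => // n _; have [v Lv] := KLv _ Ky.
    apply/in_bigsetU; exists (mkseq y n).
      by rewrite (Lv_words n Lv) /= -hy; have := Lv_phi_tail b1 n Lv; rewrite /C.
    by move=> i; rewrite size_mkseq => hi; rewrite nth_mkseq.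
  move=> [Ky Hy]; split => //.
  have [v Lv] := KLv _ Ky.
  apply/eqP; rewrite -subr_eq0; apply/eqP; apply: (zero_small b1 (D := 2 * C)) => n.
  have /in_bigsetU [u /andP [un cnd] cu] := Hy n I.
  have ue : mkseq y n = u.
    rewrite -[u](mkseq_nth 0) (words_size un); apply: agree_mkseq => i hi.
    by apply: cu; rewrite (words_size un).
  have t1 := Lv_phi_tail b1 n Lv.
  rewrite ue in t1.
  have t2 := ler_distD (sw beta u) (phi beta y) x.
  rewrite [`|sw beta u - x|]distrC in t2.
  rewrite -/C in t1 cnd.
  lra.
have mS : measurable (S : set SeqSpace).
  rewrite Seq Keq; apply: measurableI; apply: bigcapT_measurable => n;
  by apply: bigsetU_measurable => u _; exact: cyl_meas.
have hb n : (mu S <= (Fw E lab beta lam vR vL x n)%:E)%E.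
  apply: (@le_trans _ _ (mu (Vn n))).
    apply: le_measure; rewrite ?inE //.
      by apply: bigsetU_measurable => u _; exact: cyl_meas.
    by rewrite Seq => y [_ Hy]; apply: Hy.
  apply: le_trans (mu_cyl_bound (f := fun u => lam ^- size u * word_weight E lab vL vR u) _ _ Hmu) _.
  rewrite lee_fin /Fw big_seq_cond [X in _ <= X]big_seq_cond le_eqVlt; apply/orP; left; apply/eqP.
  by apply: eq_bigr => u /andP [un _]; rewrite (words_size un).
have hj j : (mu S <= ((1 - eta) ^+ j)%:E)%E.
  apply: le_trans (hb (j * K)%N) _; rewrite lee_fin.
  have := Hc j vL x (fun i => ltW (vL0 i)); rewrite norm mulr1; exact.
move: Hpos hj; rewrite -/S; case: (mu S) => [e| |] //=.
- rewrite lte_fin => e0 hj.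
  have b2 : 1 < (1 - eta)^-1.
    by rewrite invf_gt1 // ?subr_gt0 // ltrBlDr ltrDl.
  have [j hj'] := small_pow b2 1 e0.
  rewrite mul1r exprVn invrK in hj'.
  by have := hj j; rewrite lee_fin leNgt hj'.
- by move=> _ /(_ 0%N); rewrite leNgt ltey.
Qed.
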